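(* Assume the van Kampen setup below with $B_k=X_k$ for $k=0,1,2$ (so $B=X$), and let $P_k:\vec\pi_1(X_k)\to\vec\pi_1(X_k,A_k)$, $k=0,1,2$, be compatible future retracts. Let $a,a'\in A$ and let $[\gamma]:a\to a'$ be a morphism of $\vec\pi_1(X,A)$. Then there exist $n\ge 1$, points $a=y_0,y_1,\dots,y_n=a'$ of $A$, indices $k_1,\dots,k_n\in\{1,2\}$ and morphisms $\alpha_i:y_{i-1}\to y_i$ of $\vec\pi_1(X_{k_i},A_{k_i})$ such that $[\gamma]=\alpha_n\circ\dots\circ\alpha_1$ in $\vec\pi_1(X)$ (where each $\alpha_i$ is regarded in $\vec\pi_1(X)$ via the functor induced by the inclusion $X_{k_i}\subseteq X$).
   Context: A d-space is a topological space with a set of continuous paths $[0,1]\to X$ (dipaths) containing all constant paths, closed under precomposition with continuous non-decreasing maps $[0,1]\to[0,1]$ and under concatenation; subsets carry the dipaths with image in them; a dimap is a continuous map preserving dipaths. $\vec I$ is $[0,1]$ with non-decreasing paths as dipaths. The fundamental category $\vec\pi_1(X)$ has objects the points of $X$ and morphisms $a\to b$ the classes of dipaths from $a$ to $b$ modulo the equivalence relation generated by endpoint-fixing directed homotopies (dimaps $H:\vec I\times\vec I\to X$ with $H(\cdot,0)=\gamma$, $H(\cdot,1)=\gamma'$, $H(0,s)=a$, $H(1,s)=b$); composition is concatenation. For $A\subseteq X$, $\vec\pi_1(X,A)$ is the full subcategory on objects in $A$. Inclusions of d-spaces induce functors between these categories. For $A\subseteq B\subseteq X$ with inclusion $\iota:\vec\pi_1(X,A)\to\vec\pi_1(X,B)$,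 a future retract is a functor $P:\vec\pi_1(X,B)\to\vec\pi_1(X,A)$ left adjoint to $\iota$ whose unit $\eta$ satisfies $\eta_a=\mathrm{id}_a$ for $a\in A$. Van Kampen setup: $X$ is a d-space, $X_1,X_2\subseteq X$ with $X=\mathrm{Int}(X_1)\cup\mathrm{Int}(X_2)$, the dipaths of $X$ are the finite concatenations of dipaths of $X_1$ and of $X_2$, and $X_0=X_1\cap X_2$. For $k=0,1,2$, $A_k\subseteq B_k\subseteq X_k$, with $A_0=A_1\cap A_2$, $B_0=B_1\cap B_2$, $A=A_1\cup A_2$, $B=B_1\cup B_2$, $A=\mathrm{Int}_A(A_1)\cup\mathrm{Int}_A(A_2)$, $B=\mathrm{Int}_B(B_1)\cup\mathrm{Int}_B(B_2)$. Inclusions induce functors $i_k:\vec\pi_1(X_0,B_0)\to\vec\pi_1(X_k,B_k)$ and $i'_k:\vec\pi_1(X_0,A_0)\to\vec\pi_1(X_k,A_k)$ for $k=1,2$. Functors $P_k:\vec\pi_1(X_k,B_k)\to\vec\pi_1(X_k,A_k)$, $k=0,1,2$, are compatible future retracts if each $P_k$ is a future retract with unit $\eta^k$, $P_k\circ i_k=i'_k\circ P_0$ for $k=1,2$, and for every $x\in B_0$ the image of $\eta^0_x$ under the functor $\vec\pi_1(X_0)\to\vec\pi_1(X_k)$ equals $\eta^k_x$ ($k=1,2$). *)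

(* Defs.v *)
From Stdlib Require Import Reals Lra Relations.
Open Scope R_scope.

Definition I : Type := { t : R | 0 <= t <= 1 }.
Definition ival (t : I) : R := proj1_sig t.

Lemma clamp_in (r : R) : 0 <= Rmax 0 (Rmin 1 r) <= 1.
Proof.
  unfold Rmax, Rmin; repeat destruct Rle_dec; lra.
Qed.
Definition clampI (r : R) : I := exist _ (Rmax 0 (Rmin 1 r)) (clamp_in r).

Lemma zero_in : 0 <= 0 <= 1. Proof. lra. Qed.
Lemma one_in : 0 <= 1 <= 1. Proof. lra. Qed.
Definition I0 : I := exist _ 0 zero_in.
Definition I1 : I := exist _ 1 one_in.

Definition cont_I (phi : I -> I) : Prop :=
  forall t eps, 0 < eps -> exists delta, 0 < delta /\
    forall s, Rabs (ival s - ival t) < delta -> Rabs (ival (phi s) - ival (phi t)) < eps.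
Definition nondecr (phi : I -> I) : Prop :=
  forall s t, ival s <= ival t -> ival (phi s) <= ival (phi t).

Definition cont_path {X : Type} (opn : (X -> Prop) -> Prop) (g : I -> X) : Prop :=
  forall U, opn U -> forall t, U (g t) -> exists eps, 0 < eps /\
    forall s, Rabs (ival s - ival t) < eps -> U (g s).

(** Continuity of a map I x I -> X (product = metric topology). *)
Definition cont2 {X : Type} (opn : (X -> Prop) -> Prop) (H : I -> I -> X) : Prop :=
  forall U, opn U -> forall t s, U (H t s) -> exists eps, 0 < eps /\
    forall t' s', Rabs (ival t' - ival t) < eps -> Rabs (ival s' - ival s) < eps ->
      U (H t' s').

Definition pcat {X : Type} (g h : I -> X) : I -> X := fun t =>
  if Rle_dec (ival t) (1/2) then g (clampI (2 * ival t))
  else h (clampI (2 * ival t - 1)).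

Record Dspace := {
  pt : Type;
  opn : (pt -> Prop) -> Prop;
  opn_full : opn (fun _ => True);
  opn_inter : forall U V, opn U -> opn V -> opn (fun x => U x /\ V x);
  opn_union : forall F : (pt -> Prop) -> Prop, (forall U, F U -> opn U) ->
                opn (fun x => exists U, F U /\ U x);
  dip : (I -> pt) -> Prop;
  dip_cont : forall g, dip g -> cont_path opn g;
  dip_const : forall x, dip (fun _ => x);
  dip_reparam : forall g phi, dip g -> cont_I phi -> nondecr phi ->
                  dip (fun t => g (phi t));
  dip_concat : forall g h, dip g -> dip h -> g I1 = h I0 -> dip (pcat g h)
}.

Section Dsp.
Variable X : Dspace.

Definition Int (S : pt X -> Prop) (x : pt X) : Prop :=
  exists U, opn X U /\ U x /\ forall z, U z -> S z.
Definition IntRel (A S : pt X -> Prop) (x : pt X) : Prop :=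
  A x /\ exists U, opn X U /\ U x /\ forall z, U z -> A z -> S z.

(** A dipath of the sub-d-space S (dipaths of X with image in S) from x to y,
    i.e. a representative of a morphism x -> y of the fundamental category of S. *)
Definition dpath (S : pt X -> Prop) (x y : pt X) (g : I -> pt X) : Prop :=
  dip X g /\ (forall t, S (g t)) /\ g I0 = x /\ g I1 = y.

(** Endpoint-fixing directed homotopy in S from g to g': a dimap
    vec I x vec I -> S (continuous, sending pairs of dipaths of vec I to dipaths). *)
Definition dhtpy (S : pt X -> Prop) (g g' : I -> pt X) : Prop :=
  exists H : I -> I -> pt X,
    cont2 (opn X) H /\
    (forall phi psi, cont_I phi -> nondecr phi -> cont_I psi -> nondecr psi ->
        dip X (fun t => H (phi t) (psi t))) /\
    (forall t s, S (H t s)) /\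
    (forall t, H t I0 = g t) /\ (forall t, H t I1 = g' t) /\
    (forall s, H I0 s = g I0) /\ (forall s, H I1 s = g I1).

(** Equality of morphisms in the fundamental category of S: the equivalence
    relation generated by directed homotopies in S. *)
Definition dheq (S : pt X -> Prop) : relation (I -> pt X) :=
  clos_refl_sym_trans _ (dhtpy S).

(** [P] = (Pob, Pmor) is a future retract  pi1(S) -> pi1(S,T)  (T subset S),
    with unit eta.  Morphisms are represented by dipaths, their equality by [dheq S];
    composition  g o f  is [pcat f g].  The adjunction P -| iota is given by a
    natural transformation eta : Id => iota P whose components are universal arrows. *)
Definition IsFutureRetract (S T : pt X -> Prop) (Pob : pt X -> pt X)
    (Pmor : (I -> pt X) -> (I -> pt X)) (eta : pt X -> I -> pt X) : Prop :=
  (forall x, S x -> T (Pob x)) /\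
  (forall x y g, dpath S x y g -> dpath S (Pob x) (Pob y) (Pmor g)) /\
  (forall x y g g', dpath S x y g -> dpath S x y g' -> dheq S g g' ->
       dheq S (Pmor g) (Pmor g')) /\
  (forall x, S x -> dheq S (Pmor (fun _ => x)) (fun _ => Pob x)) /\
  (forall x y z g h, dpath S x y g -> dpath S y z h ->
       dheq S (Pmor (pcat g h)) (pcat (Pmor g) (Pmor h))) /\
  (forall x, S x -> dpath S x (Pob x) (eta x)) /\
  (forall x y g, dpath S x y g -> dheq S (pcat g (eta y)) (pcat (eta x) (Pmor g))) /\
  (forall x a f, S x -> T a -> dpath S x a f ->
       (exists g, dpath S (Pob x) a g /\ dheq S (pcat (eta x) g) f) /\
       (forall g g', dpath S (Pob x) a g -> dpath S (Pob x) a g' ->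
          dheq S (pcat (eta x) g) f -> dheq S (pcat (eta x) g') f -> dheq S g g')) /\
  (forall a, T a -> dheq S (eta a) (fun _ => a)).

Definition Compatible (Xk Ak : nat -> pt X -> Prop) (Pob : nat -> pt X -> pt X)
    (Pmor : nat -> (I -> pt X) -> (I -> pt X)) (eta : nat -> pt X -> I -> pt X) : Prop :=
  (forall k, k <= 2 -> IsFutureRetract (Xk k) (Ak k) (Pob k) (Pmor k) (eta k))%nat /\
  forall k, (k = 1 \/ k = 2)%nat ->
    (forall x, Xk 0%nat x -> Pob k x = Pob 0%nat x) /\
    (forall x y g, dpath (Xk 0%nat) x y g -> dheq (Xk k) (Pmor k g) (Pmor 0%nat g)) /\
    (forall x, Xk 0%nat x -> dheq (Xk k) (eta 0%nat x) (eta k x)).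

End Dsp.

(** Iterated composition alpha_n o ... o alpha_1  (= alpha_1 * ... * alpha_n). *)
Fixpoint cats {T : Type} (alpha : nat -> I -> T) (n : nat) : I -> T :=
  match n with
  | O => alpha O
  | S m => match m with
           | O => alpha 1%nat
           | _ => pcat (cats alpha m) (alpha n)
           end
  end.

(* Main.v *)
Require Import Defs.
From Stdlib Require Import Reals Lra Lia Relations.
From Stdlib Require Import Classical ClassicalEpsilon FunctionalExtensionality ProofIrrelevance.
Open Scope R_scope.

Lemma I_eq (u v : I) : ival u = ival v -> u = v.
Proof. destruct u as [x hx], v as [y hy]; simpl; intros ->; f_equal; apply proof_irrelevance. Qed.

Lemma ival_rng (u : I) : 0 <= ival u <= 1. Proof. destruct u; simpl; auto. Qed.

Lemma clamp_val r : 0 <= r <= 1 -> ival (clampI r) = r.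
Proof. intros; simpl; unfold Rmax, Rmin; repeat destruct Rle_dec; lra. Qed.

Lemma clamp_rng r : 0 <= ival (clampI r) <= 1.
Proof. apply ival_rng. Qed.

Lemma clamp_lip a b : Rabs (ival (clampI a) - ival (clampI b)) <= Rabs (a - b).
Proof. simpl; unfold Rmax, Rmin, Rabs; repeat destruct Rle_dec; repeat destruct Rcase_abs; lra. Qed.

Lemma clamp_mono a b : a <= b -> ival (clampI a) <= ival (clampI b).
Proof. simpl; unfold Rmax, Rmin; repeat destruct Rle_dec; lra. Qed.

Lemma clamp_ival u : clampI (ival u) = u.
Proof. apply I_eq, clamp_val, ival_rng. Qed.

Lemma clamp_ge1 r : 1 <= r -> clampI r = I1.
Proof. intros; apply I_eq; simpl; unfold Rmax, Rmin; repeat destruct Rle_dec; lra. Qed.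
Lemma clamp_le0 r : r <= 0 -> clampI r = I0.
Proof. intros; apply I_eq; simpl; unfold Rmax, Rmin; repeat destruct Rle_dec; lra. Qed.

Definition contR (f : I -> R) : Prop :=
  forall t eps, 0 < eps -> exists d, 0 < d /\
    forall s, Rabs (ival s - ival t) < d -> Rabs (f s - f t) < eps.

Lemma contR_ext f g : (forall t, f t = g t) -> contR f -> contR g.
Proof. intros E H t e he; destruct (H t e he) as [d [hd Hd]]; exists d; split; auto.
  intros s hs; rewrite <- !E; auto. Qed.

Lemma cont_clamp f : contR f -> cont_I (fun t => clampI (f t)).
Proof. intros H t e he; destruct (H t e he) as [d [hd Hd]]; exists d; split; auto.
  intros s hs; eapply Rle_lt_trans; [apply clamp_lip| auto]. Qed.

Lemma contR_aff p c : contR (fun t => p + c * ival t).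
Proof. intros t e he. exists (e / (Rabs c + 1)). split.
  - apply Rdiv_lt_0_compat; auto. pose proof (Rabs_pos c); lra.
  - intros s hs. replace (p + c * ival s - (p + c * ival t)) with (c * (ival s - ival t)) by ring.
    rewrite Rabs_mult. pose proof (Rabs_pos c). pose proof (Rabs_pos (ival s - ival t)).
    assert (Rabs (ival s - ival t) * (Rabs c + 1) < e).
    { apply (Rmult_lt_compat_r (Rabs c + 1)) in hs; [|lra].
      unfold Rdiv in hs; rewrite Rmult_assoc, Rinv_l in hs; lra. }
    nra. Qed.

Lemma cont_comp_R (phi : I -> I) g : cont_I phi -> contR g ->
  contR (fun t => ival (phi (clampI (g t)))).
Proof. intros Hp Hg t e he. destruct (Hp (clampI (g t)) e he) as [d [hd Hd]].
  destruct (Hg t d hd) as [d' [hd' Hd']]. exists d'; split; auto.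
  intros s hs. apply Hd. eapply Rle_lt_trans; [apply clamp_lip|auto]. Qed.

Lemma cont_comp (phi psi : I -> I) : cont_I phi -> cont_I psi -> cont_I (fun t => psi (phi t)).
Proof. intros Hp Hq t e he. destruct (Hq (phi t) e he) as [d [hd Hd]].
  destruct (Hp t d hd) as [d' [hd' Hd']]. exists d'; split; auto. Qed.

Lemma nondecr_comp (phi psi : I -> I) : nondecr phi -> nondecr psi -> nondecr (fun t => psi (phi t)).
Proof. intros Hp Hq s t h; apply Hq, Hp, h. Qed.

Lemma pw_contR c f1 f2 : contR f1 -> contR f2 -> (forall t, ival t = c -> f1 t = f2 t) ->
  contR (fun t => if Rle_dec (ival t) c then f1 t else f2 t).
Proof. intros H1 H2 E t e he.
  destruct (H1 t e he) as [d1 [hd1 D1]]. destruct (H2 t e he) as [d2 [hd2 D2]].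
  destruct (Rtotal_order (ival t) c) as [lt|[eq|gt]].
  - exists (Rmin d1 (c - ival t)). split. { apply Rmin_pos; lra. }
    intros s hs. pose proof (Rmin_l d1 (c - ival t)); pose proof (Rmin_r d1 (c - ival t)).
    destruct (Rle_dec (ival s) c); destruct (Rle_dec (ival t) c); try lra.
    + apply D1; lra.
    + exfalso. unfold Rabs in hs; destruct Rcase_abs in hs; lra.
  - exists (Rmin d1 d2). split. { apply Rmin_pos; lra. }
    intros s hs. pose proof (Rmin_l d1 d2); pose proof (Rmin_r d1 d2).
    destruct (Rle_dec (ival t) c); [|lra].
    destruct (Rle_dec (ival s) c).
    + apply D1; lra.
    + rewrite (E t eq). apply D2; lra.
  - exists (Rmin d2 (ival t - c)). split. { apply Rmin_pos; lra. }
    intros s hs. pose proof (Rmin_l d2 (ival t - c)); pose proof (Rmin_r d2 (ival t - c)).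
    destruct (Rle_dec (ival s) c); destruct (Rle_dec (ival t) c); try lra.
    + exfalso. unfold Rabs in hs; destruct Rcase_abs in hs; lra.
    + apply D2; lra.
Qed.

Lemma ival_pcat (f g : I -> I) t : ival (pcat f g t) =
  if Rle_dec (ival t) (1/2) then ival (f (clampI (2 * ival t))) else ival (g (clampI (2 * ival t - 1))).
Proof. unfold pcat; destruct Rle_dec; auto. Qed.

Lemma pcat_cont (f g : I -> I) : cont_I f -> cont_I g -> ival (f I1) = ival (g I0) ->
  cont_I (pcat f g).
Proof. intros Hf Hg E.
  assert (C : contR (fun t => ival (pcat f g t))).
  { eapply contR_ext. { intro t; symmetry; apply ival_pcat. }
    apply pw_contR.
    - apply (cont_comp_R f (fun t => 0 + 2 * ival t)) in Hf; [|apply contR_aff].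
      eapply contR_ext; [|exact Hf]. intro t; simpl; f_equal; f_equal; f_equal; ring.
    - apply (cont_comp_R g (fun t => -1 + 2 * ival t)) in Hg; [|apply contR_aff].
      eapply contR_ext; [|exact Hg]. intro t; simpl; f_equal; f_equal; f_equal; ring.
    - intros t ht. rewrite ht. rewrite (clamp_ge1 (2 * (1/2))) by lra.
      rewrite (clamp_le0 (2 * (1/2) - 1)) by lra. auto. }
  exact C. Qed.

Lemma pcat_nondecr (f g : I -> I) : nondecr f -> nondecr g -> ival (f I1) <= ival (g I0) ->
  nondecr (pcat f g).
Proof. intros Hf Hg E s t h. rewrite !ival_pcat.
  destruct (Rle_dec (ival s) (1/2)); destruct (Rle_dec (ival t) (1/2)).
  - apply Hf, clamp_mono; lra.
  - apply Rle_trans with (ival (f I1)). { apply Hf. pose proof (clamp_rng (2 * ival s)). change (ival I1) with 1. lra. }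
    eapply Rle_trans; [exact E|]. apply Hg. pose proof (clamp_rng (2 * ival t - 1)). change (ival I0) with 0. lra.
  - lra.
  - apply Hg, clamp_mono; lra.
Qed.

Definition lin (p q : R) (u : I) : I := clampI (p + ival u * (q - p)).

Lemma lin_cont p q : cont_I (lin p q).
Proof. unfold lin. apply cont_clamp. eapply contR_ext; [|apply (contR_aff p (q - p))].
  intro; simpl; ring. Qed.

Lemma lin_nondecr p q : p <= q -> nondecr (lin p q).
Proof. intros h s t hst; unfold lin; apply clamp_mono. nra. Qed.

Lemma lin_val p q u : 0 <= p <= q -> q <= 1 -> ival (lin p q u) = p + ival u * (q - p).
Proof. intros; unfold lin; apply clamp_val. pose proof (ival_rng u); nra. Qed.

Lemma lin_I0 p q : 0 <= p <= q -> q <= 1 -> ival (lin p q I0) = p.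
Proof. intros; rewrite lin_val; simpl; auto; ring. Qed.
Lemma lin_I1 p q : 0 <= p <= q -> q <= 1 -> ival (lin p q I1) = q.
Proof. intros; rewrite lin_val; simpl; auto; ring. Qed.

Definition Fr (a b s : R) := a + s * (b - a).

Lemma Fr_est a a' b b' s s' : 0 <= s' <= 1 -> 0 <= a <= 1 -> 0 <= b <= 1 ->
  Rabs (Fr a' b' s' - Fr a b s) <= 2 * Rabs (a' - a) + Rabs (b' - b) + Rabs (s' - s).
Proof. intros hs ha hb. unfold Fr.
  replace (a' + s' * (b' - a') - (a + s * (b - a))) with
    ((a' - a) + s' * ((b' - b) - (a' - a)) + (s' - s) * (b - a)) by ring.
  eapply Rle_trans; [apply Rabs_triang|].
  eapply Rle_trans; [apply Rplus_le_compat_r, Rabs_triang|].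
  rewrite !Rabs_mult.
  assert (Rabs s' <= 1) by (rewrite Rabs_pos_eq; lra).
  assert (Rabs (b - a) <= 1) by (unfold Rabs; destruct Rcase_abs; lra).
  assert (Rabs (b' - b - (a' - a)) <= Rabs (b' - b) + Rabs (a' - a)).
  { eapply Rle_trans; [apply Rabs_triang|]. rewrite Rabs_Ropp. lra. }
  pose proof (Rabs_pos s'); pose proof (Rabs_pos (b - a)); pose proof (Rabs_pos (s' - s));
  pose proof (Rabs_pos (b' - b)); pose proof (Rabs_pos (a' - a)); pose proof (Rabs_pos (b' - b - (a' - a))).
  nra. Qed.

Lemma Fr_rng a b s : 0 <= a <= 1 -> 0 <= b <= 1 -> 0 <= s <= 1 -> 0 <= Fr a b s <= 1.
Proof. unfold Fr; intros; nra. Qed.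

Lemma Fr_mono a a' b b' s s' : 0 <= s <= s' -> s' <= 1 -> a <= a' -> b <= b' -> a <= b ->
  Fr a b s <= Fr a' b' s'.
Proof. unfold Fr; intros; nra. Qed.

Section Dsp2.
Variable X : Dspace.

Definition dimap (S : pt X -> Prop) (H : I -> I -> pt X) : Prop :=
  cont2 (opn X) H /\
  (forall phi psi, cont_I phi -> nondecr phi -> cont_I psi -> nondecr psi ->
        dip X (fun t => H (phi t) (psi t))) /\
  (forall t s, S (H t s)).

Lemma const_dimap S h : dip X h -> (forall t, S (h t)) -> dimap S (fun t s => h t).
Proof. intros Hd HS. split; [|split].
  - intros U hU t s hu. destruct (dip_cont X h Hd U hU t hu) as [e [he He]].
    exists e; split; auto.
  - intros phi psi cp np cq nq. apply dip_reparam; auto.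
  - auto.
Qed.

Definition Hrep (g : I -> pt X) (r1 r2 : I -> I) (t s : I) : pt X :=
  g (clampI (Fr (ival (r1 t)) (ival (r2 t)) (ival s))).

Lemma Hrep_dimap S g r1 r2 : dip X g -> (forall t, S (g t)) ->
  cont_I r1 -> nondecr r1 -> cont_I r2 -> nondecr r2 ->
  (forall t, ival (r1 t) <= ival (r2 t)) -> dimap S (Hrep g r1 r2).
Proof. intros Hd HS c1 n1 c2 n2 le. split; [|split].
  - intros U hU t s hu. unfold Hrep in *.
    destruct (dip_cont X g Hd U hU _ hu) as [e [he He]].
    destruct (c1 t (e/4)) as [d1 [hd1 D1]]; [lra|].
    destruct (c2 t (e/4)) as [d2 [hd2 D2]]; [lra|].
    exists (Rmin (e/4) (Rmin d1 d2)). split. { repeat apply Rmin_pos; lra. }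
    intros t' s' ht hs.
    pose proof (Rmin_l (e/4) (Rmin d1 d2)); pose proof (Rmin_r (e/4) (Rmin d1 d2));
    pose proof (Rmin_l d1 d2); pose proof (Rmin_r d1 d2).
    apply He. eapply Rle_lt_trans; [apply clamp_lip|].
    eapply Rle_lt_trans; [apply Fr_est; apply ival_rng|].
    assert (Rabs (ival (r1 t') - ival (r1 t)) < e/4) by (apply D1; lra).
    assert (Rabs (ival (r2 t') - ival (r2 t)) < e/4) by (apply D2; lra).
    lra.
  - intros phi psi cp np cq nq. unfold Hrep.
    apply (dip_reparam X g (fun u => clampI (Fr (ival (r1 (phi u))) (ival (r2 (phi u))) (ival (psi u))))); auto.
    + apply cont_clamp. intros t e he.
      pose proof (cont_comp _ _ cp c1) as C1. pose proof (cont_comp _ _ cp c2) as C2.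
      destruct (C1 t (e/4)) as [d1 [hd1 D1]]; [lra|].
      destruct (C2 t (e/4)) as [d2 [hd2 D2]]; [lra|].
      destruct (cq t (e/4)) as [d3 [hd3 D3]]; [lra|].
      exists (Rmin d1 (Rmin d2 d3)). split. { repeat apply Rmin_pos; lra. }
      intros s hs.
      pose proof (Rmin_l d1 (Rmin d2 d3)); pose proof (Rmin_r d1 (Rmin d2 d3));
      pose proof (Rmin_l d2 d3); pose proof (Rmin_r d2 d3).
      eapply Rle_lt_trans; [apply Fr_est; apply ival_rng|].
      assert (Rabs (ival (r1 (phi s)) - ival (r1 (phi t))) < e/4) by (apply D1; lra).
      assert (Rabs (ival (r2 (phi s)) - ival (r2 (phi t))) < e/4) by (apply D2; lra).
      assert (Rabs (ival (psi s) - ival (psi t)) < e/4) by (apply D3; lra).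
      lra.
    + intros s t hst. apply clamp_mono. apply Fr_mono.
      * pose proof (ival_rng (psi s)); pose proof (nq s t hst); lra.
      * apply ival_rng.
      * apply n1, np, hst.
      * apply n2, np, hst.
      * apply le.
  - intros; unfold Hrep; auto.
Qed.

Lemma Hrep_htpy S g r1 r2 : dip X g -> (forall t, S (g t)) ->
  cont_I r1 -> nondecr r1 -> cont_I r2 -> nondecr r2 ->
  (forall t, ival (r1 t) <= ival (r2 t)) -> ival (r1 I0) = ival (r2 I0) ->
  ival (r1 I1) = ival (r2 I1) ->
  dhtpy X S (fun t => g (r1 t)) (fun t => g (r2 t)).
Proof. intros Hd HS c1 n1 c2 n2 le e0 e1.
  destruct (Hrep_dimap S g r1 r2) as [A [B C]]; auto.
  exists (Hrep g r1 r2). unfold Hrep. split; [auto|split; [auto|split; [auto|]]].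
  split; [|split; [|split]]; intros; f_equal; apply I_eq; rewrite clamp_val; unfold Fr; simpl;
    try (rewrite ?e0, ?e1; ring); apply Fr_rng; try apply ival_rng; simpl; lra.
Qed.

End Dsp2.

Definition sig_c (c : R) (u : I) : I :=
  clampI (if Rle_dec (ival u) c then ival u / (2 * c) else 1/2 + (ival u - c) / (2 * (1 - c))).

Lemma sig_cont c : 0 < c < 1 -> cont_I (sig_c c).
Proof. intros hc. unfold sig_c. apply cont_clamp. apply pw_contR.
  - eapply contR_ext; [|apply (contR_aff 0 (/ (2 * c)))]. intro; simpl; unfold Rdiv; ring.
  - eapply contR_ext; [|apply (contR_aff (1/2 - c / (2 * (1 - c))) (/ (2 * (1 - c))))].
    intro; simpl; unfold Rdiv; ring.
  - intros t ->. field. lra.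
Qed.

Lemma sig_nondecr c : 0 < c < 1 -> nondecr (sig_c c).
Proof. intros hc s t h. unfold sig_c. apply clamp_mono.
  assert (0 < 2 * c) by lra. assert (0 < 2 * (1 - c)) by lra.
  destruct (Rle_dec (ival s) c); destruct (Rle_dec (ival t) c).
  - unfold Rdiv; apply Rmult_le_compat_r; [left; apply Rinv_0_lt_compat; lra| lra].
  - assert (ival s / (2 * c) <= 1/2).
    { apply (Rmult_le_reg_r (2 * c)); [lra|]. unfold Rdiv; rewrite Rmult_assoc, Rinv_l; lra. }
    assert (0 <= (ival t - c) / (2 * (1 - c))).
    { unfold Rdiv; apply Rmult_le_pos; [lra| left; apply Rinv_0_lt_compat; lra]. }
    lra.
  - lra.
  - unfold Rdiv; apply Rplus_le_compat_l, Rmult_le_compat_r; [left; apply Rinv_0_lt_compat; lra| lra].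
Qed.

Section Dsp3.
Variable X : Dspace.

Lemma glue_dip (P : I -> pt X) (c : R) : 0 <= c <= 1 ->
  dip X (fun v => P (clampI (ival v * c))) ->
  dip X (fun v => P (clampI (c + ival v * (1 - c)))) -> dip X P.
Proof. intros hc HA HB.
  destruct (Req_dec c 0) as [c0|c0].
  { subst c. replace P with (fun v => P (clampI (0 + ival v * (1 - 0)))); auto.
    apply functional_extensionality; intro v; f_equal; apply I_eq; rewrite clamp_val;
      pose proof (ival_rng v); lra. }
  destruct (Req_dec c 1) as [c1|c1].
  { subst c. replace P with (fun v => P (clampI (ival v * 1))); auto.
    apply functional_extensionality; intro v; f_equal; apply I_eq; rewrite clamp_val;
      pose proof (ival_rng v); lra. }
  assert (hc' : 0 < c < 1) by lra.
  set (A := fun v => P (clampI (ival v * c))) in *.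
  set (B := fun v => P (clampI (c + ival v * (1 - c)))) in *.
  assert (AB : A I1 = B I0).
  { unfold A, B; f_equal; apply I_eq; simpl; f_equal; f_equal; ring. }
  pose proof (dip_concat X A B HA HB AB) as Hc.
  pose proof (dip_reparam X _ (sig_c c) Hc (sig_cont c hc') (sig_nondecr c hc')) as Hr.
  replace P with (fun t => pcat A B (sig_c c t)); auto.
  apply functional_extensionality; intro u. pose proof (ival_rng u).
  assert (0 < 2 * c) by lra. assert (0 < 2 * (1 - c)) by lra.
  unfold pcat, sig_c, A, B. destruct (Rle_dec (ival u) c).
  - assert (0 <= ival u / (2 * c) <= 1/2).
    { split. { unfold Rdiv; apply Rmult_le_pos; [lra| left; apply Rinv_0_lt_compat; lra]. }
      apply (Rmult_le_reg_r (2 * c)); [lra|]. unfold Rdiv; rewrite Rmult_assoc, Rinv_l; lra. }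
    rewrite clamp_val by lra. destruct Rle_dec; [|lra].
    f_equal. apply I_eq. rewrite clamp_val.
    + rewrite clamp_val; [field; lra|]. split.
      * apply Rmult_le_pos; lra.
      * replace (2 * (ival u / (2 * c))) with (ival u / c) by (field; lra).
        apply (Rmult_le_reg_r c); [lra|]. unfold Rdiv; rewrite Rmult_assoc, Rinv_l; lra.
    + pose proof (clamp_rng (2 * (ival u / (2 * c)))). split; [nra|]. nra.
  - assert (0 < (ival u - c) / (2 * (1 - c)) <= 1/2).
    { split. { unfold Rdiv; apply Rmult_lt_0_compat; [lra| apply Rinv_0_lt_compat; lra]. }
      apply (Rmult_le_reg_r (2 * (1 - c))); [lra|]. unfold Rdiv; rewrite Rmult_assoc, Rinv_l; lra. }
    rewrite clamp_val by lra. destruct Rle_dec; [lra|].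
    f_equal. apply I_eq. rewrite clamp_val.
    + rewrite clamp_val; [field; lra|]. lra.
    + pose proof (clamp_rng (2 * (1 / 2 + (ival u - c) / (2 * (1 - c))) - 1)). split; nra.
Qed.
End Dsp3.

Lemma contR_scale f p q : contR f -> contR (fun t => p + q * f t).
Proof. intros H t e he. destruct (H t (e / (Rabs q + 1))) as [d [hd D]].
  { apply Rdiv_lt_0_compat; auto. pose proof (Rabs_pos q); lra. }
  exists d; split; auto. intros s hs.
  replace (p + q * f s - (p + q * f t)) with (q * (f s - f t)) by ring.
  rewrite Rabs_mult. pose proof (Rabs_pos q). pose proof (Rabs_pos (f s - f t)).
  specialize (D s hs).
  assert (Rabs (f s - f t) * (Rabs q + 1) < e).
  { apply (Rmult_lt_compat_r (Rabs q + 1)) in D; [|lra].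
    unfold Rdiv in D; rewrite Rmult_assoc, Rinv_l in D; lra. }
  nra. Qed.

Lemma affc_cont F p q : cont_I F -> cont_I (fun v => clampI (p + q * ival (F v))).
Proof. intros H; apply cont_clamp, contR_scale, H. Qed.
Lemma affc_nondecr F p q : nondecr F -> 0 <= q -> nondecr (fun v => clampI (p + q * ival (F v))).
Proof. intros H hq s t h; apply clamp_mono. specialize (H s t h). nra. Qed.
Lemma id_cont : cont_I (fun v => v). Proof. intros t e he; exists e; split; auto. Qed.
Lemma id_nondecr : nondecr (fun v => v). Proof. intros s t h; auto. Qed.

Section Dsp4.
Variable X : Dspace.

Definition Hglue (H1 H2 : I -> I -> pt X) (t s : I) : pt X :=
  if Rle_dec (ival t) (1/2) then H1 (clampI (2 * ival t)) s else H2 (clampI (2 * ival t - 1)) s.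

Lemma glue_dimap S H1 H2 : dimap X S H1 -> dimap X S H2 -> (forall s, H1 I1 s = H2 I0 s) ->
  dimap X S (Hglue H1 H2).
Proof. intros [C1 [D1 S1]] [C2 [D2 S2]] E. split; [|split].
  - intros U hU t s hu. unfold Hglue in *.
    destruct (Rtotal_order (ival t) (1/2)) as [lt|[eq|gt]].
    + destruct (Rle_dec (ival t) (1/2)); [|lra].
      destruct (C1 U hU _ _ hu) as [e [he He]].
      exists (Rmin (e/2) (1/2 - ival t)). split. { apply Rmin_pos; lra. }
      intros t' s' ht hs. pose proof (Rmin_l (e/2) (1/2 - ival t)); pose proof (Rmin_r (e/2) (1/2 - ival t)).
      assert (ival t' < 1/2) by (unfold Rabs in ht; destruct Rcase_abs in ht; lra).
      destruct (Rle_dec (ival t') (1/2)); [|lra]. apply He; [|lra].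
      eapply Rle_lt_trans; [apply clamp_lip|].
      replace (2 * ival t' - 2 * ival t) with (2 * (ival t' - ival t)) by ring.
      rewrite Rabs_mult, Rabs_pos_eq by lra. lra.
    + destruct (Rle_dec (ival t) (1/2)); [|lra].
      assert (hu2 : U (H2 (clampI (2 * ival t - 1)) s)).
      { rewrite (clamp_le0 (2 * ival t - 1)) by lra. rewrite <- E.
        rewrite <- (clamp_ge1 (2 * ival t)) by lra. auto. }
      destruct (C1 U hU _ _ hu) as [e1 [he1 He1]].
      destruct (C2 U hU _ _ hu2) as [e2 [he2 He2]].
      exists (Rmin e1 e2 / 2). split. { pose proof (Rmin_pos e1 e2 he1 he2); lra. }
      intros t' s' ht hs. pose proof (Rmin_l e1 e2); pose proof (Rmin_r e1 e2).
      destruct (Rle_dec (ival t') (1/2)).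
      * apply He1; [|lra]. eapply Rle_lt_trans; [apply clamp_lip|].
        replace (2 * ival t' - 2 * ival t) with (2 * (ival t' - ival t)) by ring.
        rewrite Rabs_mult, (Rabs_pos_eq 2) by lra. lra.
      * apply He2; [|lra]. eapply Rle_lt_trans; [apply clamp_lip|].
        replace (2 * ival t' - 1 - (2 * ival t - 1)) with (2 * (ival t' - ival t)) by ring.
        rewrite Rabs_mult, (Rabs_pos_eq 2) by lra. lra.
    + destruct (Rle_dec (ival t) (1/2)); [lra|].
      destruct (C2 U hU _ _ hu) as [e [he He]].
      exists (Rmin (e/2) (ival t - 1/2)). split. { apply Rmin_pos; lra. }
      intros t' s' ht hs. pose proof (Rmin_l (e/2) (ival t - 1/2)); pose proof (Rmin_r (e/2) (ival t - 1/2)).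
      assert (ival t' > 1/2) by (unfold Rabs in ht; destruct Rcase_abs in ht; lra).
      destruct (Rle_dec (ival t') (1/2)); [lra|]. apply He; [|lra].
      eapply Rle_lt_trans; [apply clamp_lip|].
      replace (2 * ival t' - 1 - (2 * ival t - 1)) with (2 * (ival t' - ival t)) by ring.
      rewrite Rabs_mult, Rabs_pos_eq by lra. lra.
  - intros phi psi cp np cq nq.
    set (E0 := fun x => x = 0 \/ (0 <= x <= 1 /\ ival (phi (clampI x)) <= 1/2)).
    destruct (completeness E0) as [c [Hub Hl]].
    { exists 1. intros x [->|[hx _]]; lra. }
    { exists 0; left; auto. }
    assert (c0 : 0 <= c) by (apply Hub; left; auto).
    assert (c1 : c <= 1) by (apply Hl; intros x [->|[hx _]]; lra).
    assert (F3 : 0 < c -> ival (phi (clampI c)) <= 1/2).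
    { intros hc. destruct (Rle_dec (ival (phi (clampI c))) (1/2)) as [|n]; auto. exfalso.
      destruct (cp (clampI c) (ival (phi (clampI c)) - 1/2)) as [d [hd Dd]]; [lra|].
      assert (0 < Rmin d c) by (apply Rmin_pos; lra).
      pose proof (Rmin_l d c); pose proof (Rmin_r d c). remember (Rmin d c) as m.
      assert (UB : is_upper_bound E0 (c - m/2)).
      { intros x [->|[hx hp]]. { lra. }
        destruct (Rle_dec x (c - m/2)) as [|nx]; auto. exfalso.
        assert (x <= c) by (apply Hub; right; auto).
        assert (HH : Rabs (ival (clampI x) - ival (clampI c)) < d).
        { rewrite !clamp_val by lra. unfold Rabs; destruct Rcase_abs;  lra. }
        specialize (Dd _ HH). unfold Rabs in Dd; destruct Rcase_abs in Dd; lra. }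
      apply Hl in UB. lra. }
    assert (F4 : c < 1 -> 1/2 <= ival (phi (clampI c))).
    { intros hc. destruct (Rle_dec (1/2) (ival (phi (clampI c)))) as [|n]; auto. exfalso.
      destruct (cp (clampI c) (1/2 - ival (phi (clampI c)))) as [d [hd Dd]]; [lra|].
      assert (0 < Rmin d (1 - c)) by (apply Rmin_pos; lra).
      pose proof (Rmin_l d (1 - c)); pose proof (Rmin_r d (1 - c)). remember (Rmin d (1 - c)) as m.
      assert (EE : E0 (c + m/2)).
      { right. split; [lra|].
        assert (HH : Rabs (ival (clampI (c + m/2)) - ival (clampI c)) < d).
        { rewrite !clamp_val by lra. unfold Rabs; destruct Rcase_abs; lra. }
        specialize (Dd _ HH). unfold Rabs in Dd; destruct Rcase_abs in Dd; lra. }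
      apply Hub in EE. lra. }
    set (L1 := fun v : I => clampI (0 + c * ival v)).
    set (L2 := fun v : I => clampI (c + (1 - c) * ival v)).
    assert (cL1 : cont_I L1) by (apply (affc_cont (fun v => v)), id_cont).
    assert (nL1 : nondecr L1) by (apply (affc_nondecr (fun v => v)); [apply id_nondecr| lra]).
    assert (cL2 : cont_I L2) by (apply (affc_cont (fun v => v)), id_cont).
    assert (nL2 : nondecr L2) by (apply (affc_nondecr (fun v => v)); [apply id_nondecr| lra]).
    apply (glue_dip X _ c); [lra| |].
    + destruct (Rle_dec (ival (phi (clampI c))) (1/2)) as [hle|hgt].
      * replace (fun v => Hglue H1 H2 (phi (clampI (ival v * c))) (psi (clampI (ival v * c))))
          with (fun v => H1 (clampI (0 + 2 * ival (phi (L1 v)))) (psi (L1 v))).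
        { apply D1.
          - apply affc_cont, cont_comp; auto.
          - apply affc_nondecr; [apply nondecr_comp; auto| lra].
          - apply cont_comp; auto.
          - apply nondecr_comp; auto. }
        apply functional_extensionality; intro v.
        assert (L1 v = clampI (ival v * c)) by (unfold L1; f_equal; ring).
        rewrite H. unfold Hglue. destruct Rle_dec as [|n].
        { f_equal; f_equal; ring. }
        exfalso. apply n. eapply Rle_trans; [|exact hle]. apply np.
        apply clamp_mono. pose proof (ival_rng v); nra.
      * assert (c = 0).
        { destruct (Rle_dec c 0); [lra|]. exfalso; apply hgt, F3; lra. }
        subst c.
        replace (fun v => Hglue H1 H2 (phi (clampI (ival v * 0))) (psi (clampI (ival v * 0))))
          with (fun v : I => Hglue H1 H2 (phi (clampI 0)) (psi (clampI 0))).
        { apply dip_const. }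
        apply functional_extensionality; intro v. replace (ival v * 0) with 0 by ring; auto.
    + destruct (Req_dec c 1) as [e1|ne1].
      * subst c.
        replace (fun v => Hglue H1 H2 (phi (clampI (1 + ival v * (1 - 1)))) (psi (clampI (1 + ival v * (1 - 1)))))
          with (fun v : I => Hglue H1 H2 (phi (clampI 1)) (psi (clampI 1))).
        { apply dip_const. }
        apply functional_extensionality; intro v. replace (1 + ival v * (1 - 1)) with 1 by ring; auto.
      * assert (hge := F4 ltac:(lra)).
        replace (fun v => Hglue H1 H2 (phi (clampI (c + ival v * (1 - c)))) (psi (clampI (c + ival v * (1 - c)))))
          with (fun v => H2 (clampI (-1 + 2 * ival (phi (L2 v)))) (psi (L2 v))).
        { apply D2.
          - apply affc_cont, cont_comp; auto.
          - apply affc_nondecr; [apply nondecr_comp; auto| lra].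
          - apply cont_comp; auto.
          - apply nondecr_comp; auto. }
        apply functional_extensionality; intro v.
        assert (L2 v = clampI (c + ival v * (1 - c))) by (unfold L2; f_equal; ring).
        rewrite H. unfold Hglue. destruct Rle_dec as [hl|n].
        -- assert (ival (phi (clampI c)) <= ival (phi (clampI (c + ival v * (1 - c))))).
           { apply np, clamp_mono. pose proof (ival_rng v); nra. }
           rewrite (clamp_ge1 (2 * _)) by lra. rewrite E.
           rewrite (clamp_le0 (-1 + _)) by lra. auto.
        -- f_equal; f_equal; ring.
  - intros t s; unfold Hglue; destruct Rle_dec; auto.
Qed.
End Dsp4.

Lemma contR_max f g : contR f -> contR g -> contR (fun t => Rmax (f t) (g t)).
Proof. intros Hf Hg t e he. destruct (Hf t (e/2)) as [d1 [h1 D1]]; [lra|].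
  destruct (Hg t (e/2)) as [d2 [h2 D2]]; [lra|].
  exists (Rmin d1 d2); split; [apply Rmin_pos; lra|]. intros s hs.
  pose proof (Rmin_l d1 d2); pose proof (Rmin_r d1 d2).
  assert (A1 : Rabs (f s - f t) < e/2) by (apply D1; lra).
  assert (A2 : Rabs (g s - g t) < e/2) by (apply D2; lra).
  revert A1 A2. unfold Rmax, Rabs; repeat destruct Rle_dec; repeat destruct Rcase_abs; lra. Qed.

Lemma const_cont (c : I) : cont_I (fun _ => c).
Proof. intros t e he; exists 1; split; [lra|]; intros; rewrite Rminus_diag, Rabs_R0; auto. Qed.
Lemma const_nondecr (c : I) : nondecr (fun _ => c).
Proof. intros s t _; lra. Qed.

Lemma pcat_ext {T} (f f' g g' : I -> T) : (forall t, f t = f' t) -> (forall t, g t = g' t) ->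
  pcat f g = pcat f' g'.
Proof. intros E1 E2; apply functional_extensionality; intro t; unfold pcat; destruct Rle_dec; auto. Qed.

Lemma pcat_comp {T} (k : I -> T) (f g : I -> I) :
  pcat (fun u => k (f u)) (fun u => k (g u)) = (fun t => k (pcat f g t)).
Proof. apply functional_extensionality; intro t; unfold pcat; destruct Rle_dec; auto. Qed.

Lemma pcat_I0 {T} (f g : I -> T) : pcat f g I0 = f I0.
Proof. unfold pcat; simpl; destruct Rle_dec; [|lra]. f_equal; apply I_eq; rewrite clamp_val; simpl; lra. Qed.
Lemma pcat_I1 {T} (f g : I -> T) : pcat f g I1 = g I1.
Proof. unfold pcat; simpl; destruct Rle_dec; [lra|]. f_equal; apply I_eq; rewrite clamp_val; simpl; lra. Qed.

Section Dsp5.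
Variable X : Dspace.

Lemma dhtpy_end S g g' : dhtpy X S g g' -> g I0 = g' I0 /\ g I1 = g' I1.
Proof. intros [H [_ [_ [_ [h0 [h1 [e0 e1]]]]]]].
  split; [rewrite <- h1, e0 | rewrite <- h1, e1]; auto. Qed.

Lemma dheq_end S g g' : dheq X S g g' -> g I0 = g' I0 /\ g I1 = g' I1.
Proof. induction 1.
  - eapply dhtpy_end; eauto.
  - auto.
  - destruct IHclos_refl_sym_trans; auto.
  - destruct IHclos_refl_sym_trans1, IHclos_refl_sym_trans2; split; congruence.
Qed.

Lemma dheq_mono (S S' : pt X -> Prop) g g' : (forall x, S x -> S' x) -> dheq X S g g' -> dheq X S' g g'.
Proof. intros HS; induction 1.
  - apply rst_step. destruct H as [H [a [b [c d]]]]. exists H; repeat split; auto; apply d.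
  - apply rst_refl.
  - apply rst_sym; auto.
  - eapply rst_trans; eauto.
Qed.

Lemma dheq_refl S g : dheq X S g g. Proof. apply rst_refl. Qed.
Lemma dheq_sym S g g' : dheq X S g g' -> dheq X S g' g. Proof. apply rst_sym. Qed.
Lemma dheq_trans S g g' g'' : dheq X S g g' -> dheq X S g' g'' -> dheq X S g g''.
Proof. apply rst_trans. Qed.

Lemma dhtpy_dimap S g g' : dhtpy X S g g' ->
  exists H, dimap X S H /\ (forall t, H t I0 = g t) /\ (forall t, H t I1 = g' t) /\
    (forall s, H I0 s = g I0) /\ (forall s, H I1 s = g I1).
Proof. intros [H [a [b [c [d [e [f h]]]]]]]. exists H; repeat split; auto. Qed.

Lemma clamp2_0 : clampI (2 * 0) = I0.
Proof. apply I_eq; rewrite clamp_val; simpl; lra. Qed.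
Lemma clamp2_1 : clampI (2 * 1 - 1) = I1.
Proof. apply I_eq; rewrite clamp_val; simpl; lra. Qed.

Lemma dhtpy_cat_l S g g' h : dhtpy X S g g' -> dip X h -> (forall t, S (h t)) -> g I1 = h I0 ->
  dhtpy X S (pcat g h) (pcat g' h).
Proof. intros Hg Hh HS E. destruct (dhtpy_dimap S g g' Hg) as [H [Hd [h0 [h1 [e0 e1]]]]].
  exists (Hglue X H (fun t s => h t)).
  destruct (glue_dimap X S H (fun t s => h t) Hd (const_dimap X S h Hh HS)) as [A [B C]].
  { intros s; rewrite e1; auto. }
  split; [auto|split; [auto|split; [auto|]]].
  unfold Hglue, pcat. repeat split; intros.
  - destruct Rle_dec; auto.
  - destruct Rle_dec; auto.
  - simpl (ival I0). destruct Rle_dec; [|lra]. rewrite clamp2_0; auto.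
  - simpl (ival I1). destruct Rle_dec; [lra|]. auto.
Qed.

Lemma dhtpy_cat_r S g h h' : dhtpy X S h h' -> dip X g -> (forall t, S (g t)) -> g I1 = h I0 ->
  dhtpy X S (pcat g h) (pcat g h').
Proof. intros Hh Hg HS E. destruct (dhtpy_dimap S h h' Hh) as [H [Hd [h0 [h1 [e0 e1]]]]].
  exists (Hglue X (fun t s => g t) H).
  destruct (glue_dimap X S (fun t s => g t) H (const_dimap X S g Hg HS) Hd) as [A [B C]].
  { intros s; rewrite e0; auto. }
  split; [auto|split; [auto|split; [auto|]]].
  unfold Hglue, pcat. repeat split; intros.
  - destruct Rle_dec; auto.
  - destruct Rle_dec; auto.
  - simpl (ival I0). destruct Rle_dec; [|lra]. auto.
  - simpl (ival I1). destruct Rle_dec; [lra|]. rewrite clamp2_1, e1; auto.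
Qed.

Lemma dheq_cat_l S g g' h : dheq X S g g' -> dip X h -> (forall t, S (h t)) -> g I1 = h I0 ->
  dheq X S (pcat g h) (pcat g' h).
Proof. intros Hg Hh HS. induction Hg; intros E.
  - apply rst_step, dhtpy_cat_l; auto.
  - apply rst_refl.
  - apply rst_sym, IHHg. destruct (dheq_end S _ _ Hg); congruence.
  - eapply rst_trans; [apply IHHg1; auto| apply IHHg2].
    destruct (dheq_end S _ _ Hg1); congruence.
Qed.

Lemma dheq_cat_r S g h h' : dheq X S h h' -> dip X g -> (forall t, S (g t)) -> g I1 = h I0 ->
  dheq X S (pcat g h) (pcat g h').
Proof. intros Hh Hg HS. induction Hh; intros E.
  - apply rst_step, dhtpy_cat_r; auto.
  - apply rst_refl.
  - apply rst_sym, IHHh. destruct (dheq_end S _ _ Hh); congruence.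
  - eapply rst_trans; [apply IHHh1; auto| apply IHHh2].
    destruct (dheq_end S _ _ Hh1); congruence.
Qed.

Lemma dheq_reparam S g rho : dip X g -> (forall t, S (g t)) -> cont_I rho -> nondecr rho ->
  ival (rho I0) = 0 -> ival (rho I1) = 1 -> dheq X S g (fun t => g (rho t)).
Proof. intros Hd HS cr nr e0 e1.
  set (m := fun t => clampI (Rmax (ival (rho t)) (ival t))).
  assert (cm : cont_I m).
  { apply cont_clamp, contR_max; [apply cr| apply id_cont]. }
  assert (nm : nondecr m).
  { intros s t h; apply clamp_mono. pose proof (nr s t h). unfold Rmax; repeat destruct Rle_dec; lra. }
  assert (mv : forall t, ival (m t) = Rmax (ival (rho t)) (ival t)).
  { intro t; unfold m; apply clamp_val. pose proof (ival_rng (rho t)); pose proof (ival_rng t).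
    unfold Rmax; destruct Rle_dec; lra. }
  apply dheq_trans with (fun t => g (m t)).
  - apply rst_step. apply (Hrep_htpy X S g (fun v => v) m); auto.
    + apply id_cont. + apply id_nondecr.
    + intro t; rewrite mv; apply Rmax_r.
    + rewrite mv, e0; simpl; unfold Rmax; destruct Rle_dec; lra.
    + rewrite mv, e1; simpl; unfold Rmax; destruct Rle_dec; lra.
  - apply rst_sym, rst_step. apply (Hrep_htpy X S g rho m); auto.
    + intro t; rewrite mv; apply Rmax_l.
    + rewrite mv, e0; simpl; unfold Rmax; destruct Rle_dec; lra.
    + rewrite mv, e1; simpl; unfold Rmax; destruct Rle_dec; lra.
Qed.

Lemma dip_S_pcat (S : pt X -> Prop) (f g : I -> pt X) : (forall t, S (f t)) -> (forall t, S (g t)) -> forall t, S (pcat f g t).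
Proof. intros; unfold pcat; destruct Rle_dec; auto. Qed.

Lemma dheq_unit_r S g : dip X g -> (forall t, S (g t)) -> dheq X S (pcat g (fun _ => g I1)) g.
Proof. intros Hd HS. apply dheq_sym.
  change (pcat g (fun _ => g I1)) with (pcat (fun u => g ((fun v => v) u)) (fun u => g ((fun _ => I1) u))).
  rewrite pcat_comp. apply dheq_reparam; auto.
  - apply pcat_cont; [apply id_cont|apply const_cont|reflexivity].
  - apply pcat_nondecr; [apply id_nondecr|apply const_nondecr|simpl; lra].
  - rewrite pcat_I0; reflexivity.
  - rewrite pcat_I1; reflexivity.
Qed.

Lemma dheq_unit_l S g : dip X g -> (forall t, S (g t)) -> dheq X S (pcat (fun _ => g I0) g) g.
Proof. intros Hd HS. apply dheq_sym.
  change (pcat (fun _ => g I0) g) with (pcat (fun u => g ((fun _ => I0) u)) (fun u => g ((fun v => v) u))).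
  rewrite pcat_comp. apply dheq_reparam; auto.
  - apply pcat_cont; [apply const_cont|apply id_cont|reflexivity].
  - apply pcat_nondecr; [apply const_nondecr|apply id_nondecr|simpl; lra].
  - rewrite pcat_I0; reflexivity.
  - rewrite pcat_I1; reflexivity.
Qed.

Lemma dheq_assoc S f g h : dip X f -> dip X g -> dip X h ->
  (forall t, S (f t)) -> (forall t, S (g t)) -> (forall t, S (h t)) ->
  f I1 = g I0 -> g I1 = h I0 ->
  dheq X S (pcat (pcat f g) h) (pcat f (pcat g h)).
Proof. intros df dg dh sf sg sh e1 e2.
  set (K := pcat f (pcat g h)).
  assert (dK : dip X K).
  { apply dip_concat; auto. apply dip_concat; auto. rewrite pcat_I0; auto. }
  assert (sK : forall t, S (K t)) by (apply dip_S_pcat; auto; apply dip_S_pcat; auto).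
  set (a1 := lin 0 (1/2)). set (a2 := lin (1/2) (3/4)). set (a3 := lin (3/4) 1).
  assert (Ef : forall u, f u = K (a1 u)).
  { intro u. unfold K, a1, pcat. rewrite lin_val by lra. pose proof (ival_rng u).
    destruct Rle_dec; [|lra]. f_equal. apply I_eq. rewrite clamp_val; lra. }
  assert (Eg : forall u, g u = K (a2 u)).
  { intro u. unfold K, a2, pcat. rewrite lin_val by lra. pose proof (ival_rng u).
    destruct Rle_dec.
    - assert (ival u = 0) by lra. assert (u = I0) by (apply I_eq; auto). subst u.
      rewrite clamp_ge1 by lra. auto.
    - rewrite clamp_val by lra. destruct Rle_dec; [|lra]. f_equal. apply I_eq. rewrite clamp_val; lra. }
  assert (Eh : forall u, h u = K (a3 u)).
  { intro u. unfold K, a3, pcat. rewrite lin_val by lra. pose proof (ival_rng u).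
    destruct Rle_dec; [lra|]. rewrite clamp_val by lra. destruct Rle_dec.
    - assert (ival u = 0) by lra. assert (u = I0) by (apply I_eq; auto). subst u.
      rewrite clamp_ge1 by lra. auto.
    - f_equal. apply I_eq. rewrite clamp_val; lra. }
  assert (EQ : pcat (pcat f g) h = fun t => K (pcat (pcat a1 a2) a3 t)).
  { rewrite (pcat_ext (pcat f g) (pcat (fun u => K (a1 u)) (fun u => K (a2 u))) h (fun u => K (a3 u))).
    - rewrite pcat_comp, pcat_comp; auto.
    - intro t; rewrite (pcat_ext f (fun u => K (a1 u)) g (fun u => K (a2 u))); auto.
    - auto. }
  rewrite EQ. apply dheq_sym. apply dheq_reparam; auto.
  - apply pcat_cont; [apply pcat_cont| |].
    + apply lin_cont. + apply lin_cont.
    + unfold a1, a2; rewrite lin_I1, lin_I0; lra.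
    + apply lin_cont.
    + rewrite pcat_I1; unfold a2, a3; rewrite lin_I1, lin_I0; lra.
  - apply pcat_nondecr; [apply pcat_nondecr| |].
    + apply lin_nondecr; lra. + apply lin_nondecr; lra.
    + unfold a1, a2; rewrite lin_I1, lin_I0; lra.
    + apply lin_nondecr; lra.
    + rewrite pcat_I1; unfold a2, a3; rewrite lin_I1, lin_I0; lra.
  - rewrite !pcat_I0; unfold a1; rewrite lin_I0; lra.
  - rewrite pcat_I1; unfold a3; rewrite lin_I1; lra.
Qed.

End Dsp5.

Lemma cats_S {T} (f : nat -> I -> T) m : (1 <= m)%nat -> cats f (S m) = pcat (cats f m) (f (S m)).
Proof. intros h; destruct m; [lia|reflexivity]. Qed.

Lemma cats_comp {T} (k : I -> T) (f : nat -> I -> I) m :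
  cats (fun i u => k (f i u)) m = fun t => k (cats f m t).
Proof. induction m as [|m IH]; [reflexivity|].
  destruct m; [reflexivity|]. rewrite !cats_S by lia. rewrite IH. apply pcat_comp. Qed.

Lemma cats_dpath (X : Dspace) (Sp : pt X -> Prop) (f : nat -> I -> pt X) (z : nat -> pt X) n :
  (forall i, (1 <= i <= n)%nat -> dpath X Sp (z (i - 1)%nat) (z i) (f i)) ->
  forall m, (1 <= m <= n)%nat -> dpath X Sp (z 0%nat) (z m) (cats f m).
Proof. intros Hf m. induction m as [|m IH]; intros hm; [lia|].
  destruct (Nat.eq_dec m 0) as [->|nz].
  - apply (Hf 1%nat); lia.
  - rewrite cats_S by lia. destruct (IH ltac:(lia)) as [d1 [s1 [a1 b1]]].
    destruct (Hf (S m) ltac:(lia)) as [d2 [s2 [a2 b2]]].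
    replace (S m - 1)%nat with m in a2 by lia.
    split; [|split; [|split]].
    + apply dip_concat; auto; congruence.
    + apply dip_S_pcat; auto.
    + rewrite pcat_I0; auto.
    + rewrite pcat_I1; auto.
Qed.

Lemma dpath_T (X : Dspace) S x y g : dpath X S x y g -> dpath X (fun _ => True) x y g.
Proof. intros [a [b [c d]]]; repeat split; auto. Qed.

Theorem lemma4p1 (X : Dspace) (Xk Ak : nat -> pt X -> Prop)
  (hcover : forall x, Int X (Xk 1%nat) x \/ Int X (Xk 2%nat) x)
  (hdip : forall g, dip X g ->
     exists (n : nat) (t : nat -> R), t 0%nat = 0 /\ t n = 1 /\
       (forall i, (i < n)%nat -> t i <= t (S i)) /\
       (forall i, (i < n)%nat -> exists k, (k = 1 \/ k = 2)%nat /\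
           forall s : I, t i <= ival s <= t (S i) -> Xk k (g s)))
  (hX0 : forall x, Xk 0%nat x <-> Xk 1%nat x /\ Xk 2%nat x)
  (hAsub : forall k x, (k <= 2)%nat -> Ak k x -> Xk k x)
  (hA0 : forall x, Ak 0%nat x <-> Ak 1%nat x /\ Ak 2%nat x)
  (hAint : forall x, Ak 1%nat x \/ Ak 2%nat x ->
     IntRel X (fun z => Ak 1%nat z \/ Ak 2%nat z) (Ak 1%nat) x \/
     IntRel X (fun z => Ak 1%nat z \/ Ak 2%nat z) (Ak 2%nat) x)
  (Pob : nat -> pt X -> pt X) (Pmor : nat -> (I -> pt X) -> (I -> pt X))
  (eta : nat -> pt X -> I -> pt X)
  (hP : Compatible X Xk Ak Pob Pmor eta)
  (a a' : pt X) (ha : Ak 1%nat a \/ Ak 2%nat a) (ha' : Ak 1%nat a' \/ Ak 2%nat a')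
  (gamma : I -> pt X) (hgamma : dpath X (fun _ => True) a a' gamma) :
  exists (n : nat) (y : nat -> pt X) (k : nat -> nat) (alpha : nat -> I -> pt X),
    (1 <= n)%nat /\ y 0%nat = a /\ y n = a' /\
    (forall i, (1 <= i <= n)%nat ->
       (k i = 1 \/ k i = 2)%nat /\
       Ak (k i) (y (i - 1)%nat) /\ Ak (k i) (y i) /\
       dpath X (Xk (k i)) (y (i - 1)%nat) (y i) (alpha i)) /\
    dheq X (fun _ => True) gamma (cats alpha n).
Proof.
  destruct hP as [HF HC].
  set (TT := fun _ : pt X => True).
  assert (Pagree : forall k k' x, (k = 1 \/ k = 2)%nat -> (k' = 1 \/ k' = 2)%nat ->
            Xk k x -> Xk k' x -> Pob k x = Pob k' x).
  { intros k k' x hk hk' h1 h2. destruct (Nat.eq_dec k k') as [->|ne]; auto.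
    assert (Xk 0%nat x) by (apply hX0; destruct hk as [->| ->], hk' as [->| ->]; tauto).
    destruct (HC k hk) as [P1 _]; destruct (HC k' hk') as [P2 _].
    rewrite P1, P2; auto. }
  assert (Pfix : forall k x, (k = 1 \/ k = 2)%nat -> Xk k x -> (Ak 1%nat x \/ Ak 2%nat x) -> Pob k x = x).
  { intros k x hk hx hA.
    assert (HJ : exists j, (j = 1 \/ j = 2)%nat /\ Ak j x) by (destruct hA; eauto).
    destruct HJ as [j [hj hAj]].
    assert (hxj : Xk j x) by (apply hAsub; auto; lia).
    rewrite (Pagree k j x hk hj hx hxj).
    destruct (HF j ltac:(lia)) as [_ [_ [_ [_ [_ [Reta [_ [_ Runit]]]]]]]].
    destruct (Reta x hxj) as [_ [_ [_ e1]]].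
    destruct (dheq_end X _ _ _ (Runit x hAj)) as [_ e2]. congruence. }
  assert (eta_agree : forall k k' x, (k = 1 \/ k = 2)%nat -> (k' = 1 \/ k' = 2)%nat ->
            Xk k x -> Xk k' x -> dheq X TT (eta k x) (eta k' x)).
  { intros k k' x hk hk' h1 h2. destruct (Nat.eq_dec k k') as [->|ne]; [apply dheq_refl|].
    assert (Xk 0%nat x) by (apply hX0; destruct hk as [->| ->], hk' as [->| ->]; tauto).
    destruct (HC k hk) as [_ [_ E1]]; destruct (HC k' hk') as [_ [_ E2]].
    apply dheq_trans with (eta 0%nat x).
    - apply dheq_sym; eapply dheq_mono; [|apply E1; auto]. unfold TT; auto.
    - eapply dheq_mono; [|apply E2; auto]. unfold TT; auto. }
  assert (eta_fix : forall k x, (k = 1 \/ k = 2)%nat -> Xk k x -> (Ak 1%nat x \/ Ak 2%nat x) ->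
            dheq X TT (eta k x) (fun _ => x)).
  { intros k x hk hx hA.
    assert (HJ : exists j, (j = 1 \/ j = 2)%nat /\ Ak j x) by (destruct hA; eauto).
    destruct HJ as [j [hj hAj]].
    assert (hxj : Xk j x) by (apply hAsub; auto; lia).
    apply dheq_trans with (eta j x); [apply eta_agree; auto|].
    destruct (HF j ltac:(lia)) as [_ [_ [_ [_ [_ [Reta [_ [_ Runit]]]]]]]].
    eapply dheq_mono; [|apply Runit; auto]. unfold TT; auto. }
  destruct hgamma as [gd [_ [ga ga']]].
  destruct (hdip gamma gd) as [n [t [t0 [tn [tmono tpieces]]]]].
  assert (n1 : (1 <= n)%nat) by (destruct n; [rewrite t0 in tn; lra| lia]).
  assert (tmg : forall i j, (i <= j <= n)%nat -> t i <= t j).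
  { intros i j; induction j as [|j IH]; intros h.
    - replace i with 0%nat by lia; lra.
    - destruct (Nat.eq_dec i (S j)) as [->|ne]; [lra|].
      eapply Rle_trans; [apply IH; lia| apply tmono; lia]. }
  assert (trng : forall i, (i <= n)%nat -> 0 <= t i <= 1).
  { intros i h; split; [rewrite <- t0| rewrite <- tn]; apply tmg; lia. }
  set (kk := fun i => if excluded_middle_informative
              (forall s : I, t (i - 1)%nat <= ival s <= t i -> Xk 1%nat (gamma s)) then 1%nat else 2%nat).
  assert (kk_ok : forall i, (1 <= i <= n)%nat -> (kk i = 1 \/ kk i = 2)%nat /\
             forall s : I, t (i - 1)%nat <= ival s <= t i -> Xk (kk i) (gamma s)).
  { intros i hi. destruct (tpieces (i - 1)%nat ltac:(lia)) as [k [hk Hk]].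
    replace (S (i - 1)) with i in Hk by lia.
    unfold kk; destruct excluded_middle_informative as [y|nn]; [split; auto|].
    split; auto. destruct hk as [->| ->]; auto. contradiction. }
  set (phi := fun i => lin (t (i - 1)%nat) (t i)).
  assert (phi_ok : forall i, (1 <= i <= n)%nat -> cont_I (phi i) /\ nondecr (phi i) /\
            ival (phi i I0) = t (i - 1)%nat /\ ival (phi i I1) = t i /\
            forall u, t (i - 1)%nat <= ival (phi i u) <= t i).
  { intros i hi. assert (t (i - 1)%nat <= t i) by (apply tmg; lia).
    assert (0 <= t (i - 1)%nat <= 1) by (apply trng; lia).
    assert (0 <= t i <= 1) by (apply trng; lia).
    unfold phi; split; [apply lin_cont|split; [apply lin_nondecr; auto|]].
    rewrite lin_I0, lin_I1 by lra. split; [auto|split; [auto|]].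
    intro u; rewrite lin_val by lra. pose proof (ival_rng u); nra. }
  set (gs := fun i u => gamma (phi i u)).
  set (x := fun i => gamma (clampI (t i))).
  assert (x0 : x 0%nat = a) by (unfold x; rewrite t0, <- ga; f_equal; apply I_eq; rewrite clamp_val; simpl; lra).
  assert (xn : x n = a') by (unfold x; rewrite tn, <- ga'; f_equal; apply I_eq; rewrite clamp_val; simpl; lra).
  assert (gs_path : forall i, (1 <= i <= n)%nat -> dpath X (Xk (kk i)) (x (i - 1)%nat) (x i) (gs i)).
  { intros i hi. destruct (phi_ok i hi) as [c [nd [p0 [p1 pr]]]].
    destruct (kk_ok i hi) as [_ hk].
    split; [|split; [|split]].
    - unfold gs; apply dip_reparam; auto.
    - intro u; apply hk, pr.
    - unfold gs, x; f_equal; apply I_eq; rewrite p0, clamp_val; auto; apply trng; lia.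
    - unfold gs, x; f_equal; apply I_eq; rewrite p1, clamp_val; auto; apply trng; lia. }
  assert (xin : forall i, (1 <= i <= n)%nat -> Xk (kk i) (x (i - 1)%nat) /\ Xk (kk i) (x i)).
  { intros i hi. destruct (gs_path i hi) as [_ [s [e0 e1]]]. rewrite <- e0, <- e1; auto. }
  set (y := fun i => match i with O => a | _ => Pob (kk i) (x i) end).
  set (alpha := fun i => Pmor (kk i) (gs i)).
  assert (yprev : forall i, (1 <= i <= n)%nat -> Pob (kk i) (x (i - 1)%nat) = y (i - 1)%nat).
  { intros i hi. destruct (Nat.eq_dec i 1) as [->|ne].
    - simpl. rewrite x0. apply Pfix; auto.
      + apply kk_ok; lia.
      + rewrite <- x0; apply (xin 1%nat); lia.
    - replace (y (i - 1)%nat) with (Pob (kk (i - 1)%nat) (x (i - 1)%nat))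
        by (unfold y; destruct (i - 1)%nat eqn:E; [lia|reflexivity]).
      apply Pagree; [apply kk_ok; lia|apply kk_ok; lia| apply (proj1 (xin i hi))|apply (proj2 (xin (i - 1)%nat ltac:(lia)))]. }
  assert (ycur : forall i, (1 <= i)%nat -> y i = Pob (kk i) (x i)).
  { intros i hi; unfold y; destruct i; [lia|reflexivity]. }
  assert (yn : y n = a').
  { rewrite ycur by lia. rewrite xn. apply Pfix; auto.
    - apply kk_ok; lia.
    - rewrite <- xn; apply xin; lia. }
  assert (al_path : forall i, (1 <= i <= n)%nat -> dpath X (Xk (kk i)) (y (i - 1)%nat) (y i) (alpha i)).
  { intros i hi. destruct (HF (kk i) ltac:(destruct (kk_ok i hi) as [[-> | ->] _]; lia))
      as [_ [Rmor _]].
    rewrite <- yprev, ycur by lia. apply Rmor, gs_path; auto. }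
  assert (eta_path : forall k z, (k = 1 \/ k = 2)%nat -> Xk k z -> dpath X TT z (Pob k z) (eta k z)).
  { intros k z hk hz. destruct (HF k ltac:(lia)) as [_ [_ [_ [_ [_ [Reta _]]]]]].
    apply dpath_T with (Xk k); auto. }
  assert (Cp : forall m, (1 <= m <= n)%nat -> dpath X TT a (x m) (cats gs m)).
  { intros m hm. rewrite <- x0. apply cats_dpath with n; auto.
    intros i hi; apply dpath_T with (Xk (kk i)); auto. }
  assert (Dp : forall m, (1 <= m <= n)%nat -> dpath X TT a (y m) (cats alpha m)).
  { intros m hm. change a with (y 0%nat). apply cats_dpath with n; auto.
    intros i hi; apply dpath_T with (Xk (kk i)); auto. }
  assert (TTall : forall (g : I -> pt X) t, TT (g t)) by (intros; exact Logic.I).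
  set (EE := eta (kk 1%nat) a).
  assert (EEp : dpath X TT a a EE).
  { assert (hk1 := proj1 (kk_ok 1%nat ltac:(lia))).
    assert (ha1 : Xk (kk 1%nat) a) by (rewrite <- x0; apply (xin 1%nat); lia).
    pose proof (eta_path _ _ hk1 ha1) as P. rewrite (Pfix _ _ hk1 ha1 ha) in P. exact P. }
  assert (Tel : forall m, (1 <= m <= n)%nat ->
     dheq X TT (pcat (cats gs m) (eta (kk m) (x m))) (pcat EE (cats alpha m))).
  { intros m. induction m as [|m IH]; intros hm; [lia|].
    destruct (Nat.eq_dec m 0) as [->|nz].
    - simpl cats. unfold EE. rewrite <- x0.
      destruct (HF (kk 1%nat) ltac:(destruct (kk_ok 1%nat ltac:(lia)) as [[-> | ->] _]; lia))
        as [_ [_ [_ [_ [_ [_ [Rnat _]]]]]]].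
      eapply dheq_mono; [|apply Rnat; apply (gs_path 1%nat); lia]. unfold TT; auto.
    - specialize (IH ltac:(lia)).
      rewrite !cats_S by lia.
      destruct (Cp m ltac:(lia)) as [Cd [_ [C0 C1]]].
      destruct (Dp m ltac:(lia)) as [Dd [_ [D0 D1]]].
      destruct (gs_path (S m) ltac:(lia)) as [Gd [_ [G0 G1]]].
      replace (S m - 1)%nat with m in G0 by lia.
      destruct (al_path (S m) ltac:(lia)) as [Ad [_ [A0 A1]]].
      replace (S m - 1)%nat with m in A0 by lia.
      assert (hkS := proj1 (kk_ok (S m) ltac:(lia))).
      assert (hkm := proj1 (kk_ok m ltac:(lia))).
      destruct (xin (S m) ltac:(lia)) as [xS1 xS2]. replace (S m - 1)%nat with m in xS1 by lia.
      destruct (xin m ltac:(lia)) as [_ xm2].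
      destruct (eta_path _ _ hkS xS2) as [eSd [_ [eS0 eS1]]].
      destruct (eta_path _ _ hkS xS1) as [e'd [_ [e'0 e'1]]].
      destruct (eta_path _ _ hkm xm2) as [emd [_ [em0 em1]]].
      destruct EEp as [Ed [_ [E0 E1]]].
      assert (ym : y m = Pob (kk (S m)) (x m)).
      { pose proof (yprev (S m) ltac:(lia)) as Y. replace (S m - 1)%nat with m in Y by lia; auto. }
      assert (ym' : y m = Pob (kk m) (x m)) by (apply ycur; lia).
      destruct (HF (kk (S m)) ltac:(destruct hkS as [-> | ->]; lia))
        as [_ [_ [_ [_ [_ [_ [Rnat _]]]]]]].
      eapply dheq_trans.
      { apply dheq_assoc; auto; congruence. }
      eapply dheq_trans.
      { apply dheq_cat_r; auto.
        - eapply dheq_mono; [|apply Rnat; apply (gs_path (S m)); lia]. unfold TT; auto.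
        - rewrite pcat_I0; congruence. }
      replace (S m - 1)%nat with m by lia.
      eapply dheq_trans.
      { apply dheq_sym, dheq_assoc; auto; [congruence|]. fold (alpha (S m)). congruence. }
      fold (alpha (S m)).
      eapply dheq_trans.
      { apply dheq_cat_l; auto.
        - apply dheq_cat_r; auto; [|congruence]. apply (eta_agree (kk (S m)) (kk m) (x m) hkS hkm xS1 xm2).
        - rewrite pcat_I1; congruence. }
      eapply dheq_trans.
      { apply dheq_cat_l; [exact IH|auto|auto|]. rewrite pcat_I1; congruence. }
      apply dheq_assoc; auto; congruence. }
  assert (cphi : forall m, (1 <= m <= n)%nat -> cont_I (cats phi m) /\ nondecr (cats phi m) /\
             ival (cats phi m I0) = t 0%nat /\ ival (cats phi m I1) = t m).
  { intros m; induction m as [|m IH]; intros hm; [lia|].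
    destruct (Nat.eq_dec m 0) as [->|nz].
    - simpl cats. destruct (phi_ok 1%nat ltac:(lia)) as [c [nd [p0 [p1 _]]]]. auto.
    - specialize (IH ltac:(lia)). destruct IH as [c [nd [p0 p1]]].
      destruct (phi_ok (S m) ltac:(lia)) as [c' [nd' [p0' [p1' _]]]].
      replace (S m - 1)%nat with m in p0' by lia.
      rewrite cats_S by lia. split; [|split; [|split]].
      + apply pcat_cont; auto; congruence.
      + apply pcat_nondecr; auto; lra.
      + rewrite pcat_I0; auto.
      + rewrite pcat_I1; auto. }
  exists n, y, kk, alpha. split; [auto|split; [reflexivity|split; [auto|split]]].
  { intros i hi. split; [apply kk_ok; auto|].
    destruct (HF (kk i) ltac:(destruct (kk_ok i hi) as [[-> | ->] _]; lia)) as [Rob _].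
    split; [|split; [|apply al_path; auto]].
    - rewrite <- yprev by auto. apply Rob, xin; auto.
    - rewrite ycur by lia. apply Rob, xin; auto. }
  fold TT.
  assert (Cn : cats gs n = fun s => gamma (cats phi n s)) by (apply (cats_comp gamma phi n)).
  destruct (Cp n ltac:(lia)) as [Cd [_ [C0 C1]]].
  destruct (Dp n ltac:(lia)) as [Dd [_ [D0 D1]]].
  assert (hkn := proj1 (kk_ok n ltac:(lia))).
  destruct (xin n ltac:(lia)) as [_ xn2].
  destruct (eta_path _ _ hkn xn2) as [end_ [_ [en0 en1]]].
  destruct EEp as [Ed [_ [E0 E1]]].
  eapply dheq_trans; [apply dheq_sym, (dheq_unit_r X TT gamma gd); auto|].
  eapply dheq_trans.
  { apply (dheq_cat_l X TT gamma (cats gs n)); [| apply dip_const | auto | reflexivity].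
    rewrite Cn. destruct (cphi n ltac:(lia)) as [c [nd [p0 p1]]].
    apply dheq_reparam; auto; congruence. }
  eapply dheq_trans.
  { apply (dheq_cat_r X TT (cats gs n) (fun _ => gamma I1) (eta (kk n) (x n))); auto; [| rewrite C1, ga', xn; reflexivity].
    apply dheq_sym. rewrite ga', <- xn. apply eta_fix; auto. rewrite xn; auto. }
  eapply dheq_trans; [apply Tel; lia|].
  eapply dheq_trans.
  { apply (dheq_cat_l X TT EE (fun _ => a) (cats alpha n)); [apply eta_fix; auto| apply Dd| auto|congruence].
    apply kk_ok; lia. rewrite <- x0; apply (xin 1%nat); lia. }
  rewrite <- D0. apply dheq_unit_l; auto.
Qed.
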